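(* Let $d\ge1$ and let $G$ be a $d$-regular triangle-free graph on $n$ vertices. Then for every $\lambda>0$, \[ \frac1n\log P_G(\lambda)\;\le\;\frac{1}{2d}\log P_{K_{d,d}}(\lambda)=\frac{1}{2d}\log\big(2(1+\lambda)^d-1\big). \] In particular ($\lambda=1$), $G$ has at most $\big(2^{d+1}-1\big)^{n/(2d)}$ independent sets.
   Context: For a graph $H$ and $\lambda>0$, $P_H(\lambda)=\sum_J\lambda^{|J|}$ summed over all independent sets $J$ of $H$ (including the empty set). $K_{d,d}$ is the complete bipartite graph with parts of size $d$. Logarithms are natural. *)

(* Defs.v *)
From Stdlib Require Import Reals List Arith Bool.
Import ListNotations.
Open Scope R_scope.

(* A graph on vertex set {0,...,n-1} is given by adj : nat -> nat -> bool
   (only its values on vertices < n matter). *)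

Definition is_simple_graph (n : nat) (adj : nat -> nat -> bool) : Prop :=
  (forall u v, (u < n)%nat -> (v < n)%nat -> adj u v = adj v u) /\
  (forall u, (u < n)%nat -> adj u u = false).

Definition is_regular (n d : nat) (adj : nat -> nat -> bool) : Prop :=
  forall v, (v < n)%nat -> length (filter (adj v) (seq 0 n)) = d.

Definition triangle_free (n : nat) (adj : nat -> nat -> bool) : Prop :=
  forall u v w, (u < n)%nat -> (v < n)%nat -> (w < n)%nat ->
    ~ (adj u v = true /\ adj v w = true /\ adj u w = true).

Fixpoint sublists (l : list nat) : list (list nat) :=
  match l with
  | [] => [[]]
  | x :: t => let r := sublists t in r ++ map (cons x) r
  end.

Definition independentb (adj : nat -> nat -> bool) (S : list nat) : bool :=
  forallb (fun x => forallb (fun y => negb (adj x y)) S) S.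

Definition indep_sets (n : nat) (adj : nat -> nat -> bool) : list (list nat) :=
  filter (independentb adj) (sublists (seq 0 n)).

Definition indep_poly (n : nat) (adj : nat -> nat -> bool) (lam : R) : R :=
  fold_right Rplus 0 (map (fun S => lam ^ length S) (indep_sets n adj)).

(* K_{d,d} on vertices {0..2d-1}: parts {0..d-1} and {d..2d-1} *)
Definition Kdd_adj (d : nat) (x y : nat) : bool :=
  xorb (Nat.ltb x d) (Nat.ltb y d).

Definition P_Kdd (d : nat) (lam : R) : R := indep_poly (2 * d) (Kdd_adj d) lam.

(* Main.v *)
From Stdlib Require Import Reals List Arith Lra FunctionalExtensionality.
From HB Require Import structures.
From mathcomp Require Import all_boot all_order all_algebra.
From mathcomp Require Import Rstruct.
From mathcomp Require Import ring lra.
Require Import Defs.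
Import Order.TTheory GRing.Theory Num.Theory.
Set Implicit Arguments. Unset Strict Implicit. Unset Printing Implicit Defensive.

Ltac rlra := Stdlib.micromega.Lra.lra.
Ltac rnra := Stdlib.micromega.Lra.nra.
Section Generic.
Local Open Scope ring_scope.
Variable T : finType.

Lemma sum_sub0 (F : {set T} -> R) : \sum_(S : {set T} | S \subset set0) F S = F set0.
Proof.
rewrite (eq_bigl (fun S : {set T} => S == set0)); first by rewrite big_pred1_eq.
by move=> S; rewrite /= subset0.
Qed.

Lemma split_subsets (x : T) (U : {set T}) (F : {set T} -> R) : x \notin U ->
  \sum_(S : {set T} | S \subset x |: U) F S =
  \sum_(S : {set T} | S \subset U) F S + \sum_(S : {set T} | S \subset U) F (x |: S).
Proof.
move=> xU.
rewrite (bigID (fun S : {set T} => x \in S)) /= addrC.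
congr (_ + _).
- apply: eq_bigl => S; apply/andP/idP.
  + case=> sS xS; apply/subsetP => y yS; have := subsetP sS y yS.
    rewrite !inE; case/orP => // /eqP yx; by rewrite -yx yS in xS.
  + move=> sS; split; first by apply: (subset_trans sS); apply: subsetUr.
    apply/negP => xS; by rewrite (subsetP sS x xS) in xU.
- rewrite (reindex_onto (fun S => x |: S) (fun S => S :\ x)); last first.
    by move=> S /andP[_ xS]; rewrite setD1K.
  apply: eq_bigl => S; apply/idP/idP.
  + case/andP=> /andP[sS _] /eqP eS.
    have xS : x \notin S by rewrite -eS !inE eqxx.
    apply/subsetP => y yS.
    have := subsetP sS y; rewrite !inE yS orbT => /(_ isT); case/orP => // /eqP yx.
    by rewrite -yx yS in xS.
  + move=> sS; have xS : x \notin S by apply/negP => xS; rewrite (subsetP sS x xS) in xU.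
    by rewrite setU1K // eqxx setU11 andbT setUS.
Qed.

Lemma sum_subsets_disj (P Q : {set T}) (F : {set T} -> R) : [disjoint P & Q] ->
  \sum_(A : {set T} | A \subset P :|: Q) F A =
  \sum_(J : {set T} | J \subset P) \sum_(S : {set T} | S \subset Q) F (J :|: S).
Proof.
move: {2}#|P| (erefl #|P|) => k; elim: k P F => [|k IH] P F hk dPQ.
  have -> : P = set0 by apply/eqP; rewrite -cards_eq0 -hk.
  rewrite sum_sub0 set0U; apply: eq_bigr => S _; by rewrite set0U.
have : (0 < #|P|)%nat by rewrite hk.
case/card_gt0P => x xP.
have hP : P = x |: (P :\ x) by rewrite setD1K.
have xP' : x \notin P :\ x by rewrite !inE eqxx.
have dPQ' : [disjoint P :\ x & Q].
  by apply: (disjointWl _ dPQ); apply: subsetDl.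
have xQ : x \notin Q.
  by move: dPQ; rewrite disjoint_subset => /subsetP /(_ x xP); rewrite !inE.
have hk' : #|P :\ x| = k by move: hk; rewrite (cardsD1 x P) xP add1n => -[].
rewrite hP -setUA split_subsets; last by rewrite in_setU negb_or xP' xQ.
rewrite split_subsets //.
rewrite (IH _ F hk' dPQ') (IH _ (fun S => F (x |: S)) hk' dPQ').
congr (_ + _); apply: eq_bigr => J _; apply: eq_bigr => S _; by rewrite setUA.
Qed.

End Generic.
Section Binom.
Local Open Scope ring_scope.
Variable T : finType.

Lemma card_ind_set (Pr : {set T} -> Prop) :
  Pr set0 -> (forall (x : T) (U : {set T}), x \notin U -> Pr U -> Pr (x |: U)) -> forall U, Pr U.
Proof.
move=> H0 HS U; move: {2}#|U| (erefl #|U|) => k; elim: k U => [|k IH] U hk.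
  have -> : U = set0 by apply/eqP; rewrite -cards_eq0 -hk.
  exact: H0.
have : (0 < #|U|)%nat by rewrite hk.
case/card_gt0P => x xU.
rewrite -(setD1K xU); apply: HS; first by rewrite !inE eqxx.
by apply: IH; move: hk; rewrite (cardsD1 x U) xU add1n => -[].
Qed.

Lemma sub_notin (x : T) (U S : {set T}) : x \notin U -> S \subset U -> x \notin S.
Proof. by move=> xU sS; apply/negP => xS; rewrite (subsetP sS x xS) in xU. Qed.

Lemma sum_pow_subsets (U : {set T}) (t : R) :
  \sum_(S : {set T} | S \subset U) t ^+ #|S| = (1 + t) ^+ #|U|.
Proof.
elim/card_ind_set: U => [|x U xU IH].
  by rewrite sum_sub0 cards0 !expr0.
rewrite split_subsets // IH cardsU1 xU add1n exprS.
rewrite (eq_bigr (fun S : {set T} => t * t ^+ #|S|)); last first.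
  by move=> S sS; rewrite cardsU1 (sub_notin xU sS) add1n exprS.
by rewrite -big_distrr /= IH mulrDl mul1r.
Qed.

Lemma sum_card_pow_subsets (U : {set T}) (t : R) :
  (1 + t) * \sum_(S : {set T} | S \subset U) #|S|%:R * t ^+ #|S|
  = #|U|%:R * t * (1 + t) ^+ #|U|.
Proof.
elim/card_ind_set: U => [|x U xU IH].
  by rewrite sum_sub0 cards0 !mul0r mulr0.
rewrite split_subsets //.
rewrite [X in _ * (_ + X) = _](eq_bigr (fun S : {set T} => t * (#|S|%:R * t ^+ #|S|) + t * t ^+ #|S|)); last first.
  move=> S sS /=; rewrite cardsU1 (sub_notin xU sS) add1n exprS -addn1 natrD.
  ring.
rewrite big_split /= -!big_distrr /= sum_pow_subsets cardsU1 xU add1n.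
rewrite exprS -addn1 natrD.
rewrite !mulrDr IH mulrCA IH.
ring.
Qed.

End Binom.
Section Numeric.
Local Open Scope ring_scope.

Lemma bernoulli (q : R) (k : nat) : 1 <= q -> 1 + k%:R * (q - 1) <= q ^+ k.
Proof.
move=> hq; elim: k => [|k IH]; first by rewrite mul0r addr0 expr0.
rewrite exprS -addn1 natrD.
have h0 : 0 <= k%:R :> R by apply: ler0n.
have h1 : 0 <= k%:R * (q - 1) by apply: mulr_ge0 => //; lra.
have h2 : 0 <= k%:R * (q - 1) * (q - 1) by apply: mulr_ge0 => //; lra.
nra.
Qed.

Lemma step_ineq (q : R) (m : nat) : 1 <= q ->
  m%:R * (q * q ^+ m - 1) <= (m%:R + 1) * q * (q ^+ m - 1).
Proof.
move=> hq; have := bernoulli m.+1 hq; rewrite exprS -addn1 natrD.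
nra.
Qed.

Lemma key_abs (q y M a b : R) : 1 <= q -> 0 <= y -> 1 <= M -> 1 <= a -> 1 <= b ->
  y * (a - 1) * b <= M * a * (b - 1) -> M * (q * a - 1) <= (M + 1) * q * (a - 1) ->
  y * (q * a - 1) * b <= (M + 1) * (q * a) * (b - 1).
Proof.
move=> hq hy hM ha hb F S.
have h1 : M * (y * (q * a - 1) * b) <= (M + 1) * q * (y * (a - 1) * b).
  have hyb : 0 <= y * b by nra.
  nra.
have h2 : (M + 1) * q * (y * (a - 1) * b) <= (M + 1) * q * (M * a * (b - 1)).
  have hMq : 0 <= (M + 1) * q by nra.
  nra.
have h3 : M * (y * (q * a - 1) * b) <= M * ((M + 1) * (q * a) * (b - 1)) by nra.
by rewrite ler_pM2l in h3 => //; lra.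
Qed.

Lemma key_ineq (q : R) (Y d : nat) : 1 <= q -> (Y <= d)%N ->
  Y%:R * (q ^+ d - 1) * q ^+ Y <= d%:R * q ^+ d * (q ^+ Y - 1).
Proof.
move=> hq; case: Y => [|Y] hY.
  by rewrite !mul0r expr0 subrr mulr0.
have hb : 1 <= q ^+ Y.+1 by rewrite exprn_ege1.
rewrite -(subnKC hY); clear hY; move: (d - Y.+1)%N => k.
elim: k => [|k IH]; first by rewrite addn0 mulrAC.
have hM : 1 <= (Y.+1 + k)%:R :> R by rewrite ler1n addSn.
have hS := step_ineq (Y.+1 + k) hq.
rewrite addnS exprS.
have -> : (Y.+1 + k).+1%:R = (Y.+1 + k)%:R + 1 :> R by rewrite -addn1 natrD.
apply: key_abs => //.
by rewrite exprn_ege1.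
Qed.

End Numeric.
Section Graph.
Local Open Scope ring_scope.
Variable n : nat.
Variable adj : nat -> nat -> bool.
Hypothesis hsym : forall u v : 'I_n, adj u v = adj v u.
Hypothesis hirr : forall u : 'I_n, adj u u = false.

Definition indep (A : {set 'I_n}) : bool := [forall x in A, forall y in A, ~~ adj x y].
Definition Nb (v : 'I_n) : {set 'I_n} := [set u : 'I_n | adj v u].
Definition Zs (t : R) : R := \sum_(A : {set 'I_n} | indep A) t ^+ #|A|.
Definition dZs (t : R) : R := \sum_(A : {set 'I_n} | indep A) #|A|%:R * t ^+ (#|A|.-1).
Definition Av (v : 'I_n) (t : R) : R := \sum_(A : {set 'I_n} | indep A && (v \in A)) t ^+ #|A|.
Definition Bv (v : 'I_n) (t : R) : R :=
  \sum_(A : {set 'I_n} | indep A && [disjoint A & Nb v]) t ^+ #|A|.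
Definition Uset (v : 'I_n) (J : {set 'I_n}) : {set 'I_n} :=
  [set u in Nb v | [forall y in J, ~~ adj u y]].

Lemma indepP (A : {set 'I_n}) :
  reflect (forall x y, x \in A -> y \in A -> adj x y = false) (indep A).
Proof.
apply: (iffP forall_inP) => H.
  by move=> x y xA yA; move/forall_inP: (H x xA) => /(_ y yA) /negbTE.
by move=> x xA; apply/forall_inP => y yA; rewrite H.
Qed.

Lemma indep_sub (A B : {set 'I_n}) : A \subset B -> indep B -> indep A.
Proof.
move=> sAB /indepP H; apply/indepP => x y xA yA; apply: H; exact: (subsetP sAB).
Qed.

Lemma notin_disj (x : 'I_n) (A B : {set 'I_n}) : [disjoint A & B] -> x \in B -> x \notin A.
Proof.
move=> dAB xB; apply/negP => xA; move: dAB; rewrite disjoint_subset => /subsetP /(_ x xA).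
by rewrite !inE xB.
Qed.

Lemma notin_disj' (x : 'I_n) (A B : {set 'I_n}) : [disjoint A & B] -> x \in A -> x \notin B.
Proof.
by move=> dAB xA; move: dAB; rewrite disjoint_subset => /subsetP /(_ x xA); rewrite !inE.
Qed.

Lemma disjP' (A B : {set 'I_n}) : (forall x, x \in A -> x \in B -> False) -> [disjoint A & B].
Proof.
move=> H; rewrite disjoint_subset; apply/subsetP => x xA; rewrite !inE.
by apply/negP => xB; exact: (H x xA xB).
Qed.

Lemma indep_add (v : 'I_n) (B : {set 'I_n}) :
  indep (v |: B) = indep B && [disjoint B & Nb v].
Proof.
apply/idP/andP.
  move=> hI; split; first by apply: (indep_sub _ hI); apply: subsetUr.
  apply: disjP' => x xB; rewrite !inE => hvx.
  by move/indepP: hI => /(_ v x); rewrite !inE eqxx xB orbT hvx => /(_ isT isT).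
case=> /indepP hB hd; apply/indepP => x y; rewrite !inE.
case/orP=> [/eqP -> | xB]; case/orP=> [/eqP -> | yB].
- exact: hirr.
- by have := notin_disj' hd yB; rewrite !inE => /negbTE.
- by rewrite hsym; have := notin_disj' hd xB; rewrite !inE => /negbTE.
- exact: hB.
Qed.


Lemma C1 (v : 'I_n) (t : R) : (1 + t) * Av v t = t * Bv v t.
Proof.
set W := \sum_(A : {set 'I_n} | (indep A && [disjoint A & Nb v]) && (v \notin A)) t ^+ #|A|.
have hB : Bv v t = Av v t + W.
  rewrite /Bv (bigID (fun A : {set 'I_n} => v \in A)) /=; congr (_ + _).
  apply: eq_bigl => A; apply/idP/idP; first by case/andP => /andP[-> _] ->.
  case/andP => hA vA; rewrite hA vA andbT /=.
  apply: disjP' => u uA; rewrite !inE => hvu.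
  by move/indepP: hA => /(_ v u vA uA); rewrite hvu.
have hA : Av v t = t * W.
  rewrite /Av (reindex_onto (fun B => v |: B) (fun A => A :\ v)); last first.
    by move=> A /andP[_ vA]; rewrite setD1K.
  rewrite /W big_distrr /=; apply: eq_big => B.
    rewrite indep_add setU11 andbT; apply/idP/idP.
      case/andP=> -> /eqP eB; rewrite andTb; apply/negP => vB.
      by move: vB; rewrite -eB !inE eqxx.
    by case/andP=> -> vB; rewrite setU1K ?eqxx.
  case/andP=> _ /eqP eB.
  have vB : v \notin B by rewrite -eB !inE eqxx.
  by rewrite cardsU1 vB add1n exprS.
rewrite hB hA; ring.
Qed.


Hypothesis htf : forall u v w : 'I_n, adj u v -> adj v w -> adj u w -> False.

Lemma Uset_sub (v : 'I_n) J : Uset v J \subset Nb v.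
Proof. by apply/subsetP => x; rewrite !inE => /andP[]. Qed.

Lemma indep_JS (v : 'I_n) (J S : {set 'I_n}) : S \subset Nb v ->
  indep (J :|: S) = indep J && (S \subset Uset v J).
Proof.
move=> sS; apply/idP/andP.
  move=> hI; split; first by apply: (indep_sub _ hI); apply: subsetUl.
  apply/subsetP => u uS; rewrite !inE.
  have := subsetP sS u uS; rewrite !inE => -> /=.
  apply/forall_inP => y yJ; apply/negbT.
  by move/indepP: hI; apply; rewrite !inE ?uS ?yJ ?orbT.
case=> /indepP hJ /subsetP hU; apply/indepP => x y; rewrite !inE.
case/orP=> xJ; case/orP=> yJ.
- exact: hJ.
- have := hU y yJ; rewrite !inE => /andP[_ /forall_inP /(_ x xJ) /negbTE].
  by rewrite hsym.
- by have := hU x xJ; rewrite !inE => /andP[_ /forall_inP /(_ y yJ) /negbTE].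
- have := subsetP sS x xJ; have := subsetP sS y yJ; rewrite !inE => hy hx.
  by apply/negbTE/negP => hxy; apply: (htf hx hxy hy).
Qed.

Lemma fiber (v : 'I_n) (H : {set 'I_n} -> {set 'I_n} -> R) :
  \sum_(A : {set 'I_n} | indep A) H (A :\: Nb v) (A :&: Nb v) =
  \sum_(J : {set 'I_n} | (J \subset ~: Nb v) && indep J)
     \sum_(S : {set 'I_n} | S \subset Uset v J) H J S.
Proof.
rewrite big_mkcond /=.
rewrite (eq_bigl (fun A : {set 'I_n} => A \subset ~: Nb v :|: Nb v)); last first.
  by move=> A; apply/esym/subsetP => x _; rewrite !inE orNb.
rewrite sum_subsets_disj; last by apply: disjP' => x; rewrite !inE => /negP.
rewrite big_mkcondr /=; apply: eq_bigr => J sJ.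
rewrite (eq_bigr (fun S : {set 'I_n} => if indep J && (S \subset Uset v J) then H J S else 0)); last first.
  move=> S sS; rewrite (indep_JS J sS).
  have -> : (J :|: S) :\: Nb v = J.
    apply/setP => x; rewrite !inE; move: (subsetP sJ x) (subsetP sS x); rewrite !inE.
    case: (x \in J); case: (x \in S); case: (adj v x) => h1 h2 //=; (try by move: (h1 isT)); by move: (h2 isT).
  have -> : (J :|: S) :&: Nb v = S.
    apply/setP => x; rewrite !inE; move: (subsetP sJ x) (subsetP sS x); rewrite !inE.
    case: (x \in J); case: (x \in S); case: (adj v x) => h1 h2 //=; (try by move: (h1 isT)); by move: (h2 isT).
  by [].
case: (indep J) => /=; last by rewrite big1.
rewrite -big_mkcondr; apply: eq_bigl => S; apply/andP/idP; first by case.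
move=> h; split => //; exact: (subset_trans h (Uset_sub v J)).
Qed.


Lemma sumAv (N : {set 'I_n}) (t : R) :
  \sum_(u in N) Av u t = \sum_(A : {set 'I_n} | indep A) #|A :&: N|%:R * t ^+ #|A|.
Proof.
rewrite /Av.
under eq_bigr do rewrite big_mkcondr.
rewrite exchange_big /=; apply: eq_bigr => A _.
rewrite -big_mkcondr /=.
rewrite (eq_bigl (fun u => u \in A :&: N)); last by move=> u; rewrite !inE andbC.
by rewrite sumr_const mulr_natl.
Qed.


Lemma split_pow (v : 'I_n) (t : R) (A : {set 'I_n}) :
  t ^+ #|A| = t ^+ #|A :\: Nb v| * t ^+ #|A :&: Nb v|.
Proof. by rewrite -exprD addnC cardsID. Qed.

Definition T2 (U : {set 'I_n}) (t : R) := \sum_(S : {set 'I_n} | S \subset U) #|S|%:R * t ^+ #|S|.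

Lemma fibZ (v : 'I_n) (t : R) : Zs t =
  \sum_(J : {set 'I_n} | (J \subset ~: Nb v) && indep J) t ^+ #|J| * (1 + t) ^+ #|Uset v J|.
Proof.
rewrite /Zs (eq_bigr (fun A => t ^+ #|A :\: Nb v| * t ^+ #|A :&: Nb v|)); last first.
  by move=> A _; rewrite -(@split_pow v).
rewrite (fiber v (fun J S => t ^+ #|J| * t ^+ #|S|)); apply: eq_bigr => J _.
by rewrite -big_distrr /= sum_pow_subsets.
Qed.

Lemma fibB (v : 'I_n) (t : R) : Bv v t =
  \sum_(J : {set 'I_n} | (J \subset ~: Nb v) && indep J) t ^+ #|J|.
Proof.
rewrite /Bv big_mkcondr /=.
rewrite (eq_bigr (fun A => if A :&: Nb v == set0 then t ^+ #|A :\: Nb v| * t ^+ #|A :&: Nb v| else 0)); last first.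
  by move=> A _; rewrite setI_eq0 -(@split_pow v).
rewrite (fiber v (fun J S => if S == set0 then t ^+ #|J| * t ^+ #|S| else 0)); apply: eq_bigr => J _.
rewrite -big_mkcondr /=.
rewrite (eq_bigl (fun S => S == set0)); last by move=> S; apply/andP/idP => [[]//|/eqP ->]; rewrite sub0set.
by rewrite big_pred1_eq cards0 expr0 mulr1.
Qed.

Lemma fibM (v : 'I_n) (t : R) : \sum_(u in Nb v) Av u t =
  \sum_(J : {set 'I_n} | (J \subset ~: Nb v) && indep J) t ^+ #|J| * T2 (Uset v J) t.
Proof.
rewrite sumAv (eq_bigr (fun A => #|A :&: Nb v|%:R * (t ^+ #|A :\: Nb v| * t ^+ #|A :&: Nb v|))); last first.
  by move=> A _; rewrite -(@split_pow v).
rewrite (fiber v (fun J S => #|S|%:R * (t ^+ #|J| * t ^+ #|S|))); apply: eq_bigr => J _.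
rewrite /T2 big_distrr /=; apply: eq_bigr => S _; ring.
Qed.

Variable d : nat.
Hypothesis hreg : forall v : 'I_n, #|Nb v| = d.

Lemma vertex_ineq (v : 'I_n) (t : R) : 0 < t ->
  t * d%:R * (1 + t) ^+ d * Bv v t + ((1 + t) ^+ d - 1) * (1 + t) * \sum_(u in Nb v) Av u t
  <= t * d%:R * (1 + t) ^+ d * Zs t.
Proof.
move=> ht.
rewrite fibB fibM (fibZ v) !big_distrr -big_split /=; apply: ler_sum => J _.
have hY : (#|Uset v J| <= d)%N by rewrite -(hreg v); apply: subset_leq_card; apply: Uset_sub.
have hq : 1 <= 1 + t by lra.
have K := key_ineq hq hY.
have E := sum_card_pow_subsets (Uset v J) t.
rewrite -/(T2 _ _) in E.
move: K E; set Y := #|Uset v J|%:R; set a := (1 + t) ^+ d; set b := (1 + t) ^+ #|Uset v J|.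
set T := T2 (Uset v J) t; set w := t ^+ #|J| => K E.
have hw : 0 <= w by rewrite exprn_ge0 // ltW.
have hwt : 0 <= w * t by rewrite mulr_ge0 // ltW.
have -> : t * d%:R * a * w + (a - 1) * (1 + t) * (w * T) = w * t * (d%:R * a) + w * t * (Y * (a - 1) * b).
  have -> : (a - 1) * (1 + t) * (w * T) = w * (a - 1) * ((1 + t) * T) by ring.
  rewrite E; ring.
have -> : t * d%:R * a * (w * b) = w * t * (d%:R * a * b) by ring.
rewrite -mulrDr; apply: ler_wpM2l => //.
lra.
Qed.


Lemma sumM_all (t : R) :
  \sum_(v : 'I_n) \sum_(u in Nb v) Av u t = d%:R * \sum_(u : 'I_n) Av u t.
Proof.
under eq_bigr do rewrite big_mkcond /=.
rewrite exchange_big /= big_distrr /=; apply: eq_bigr => u _.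
rewrite -big_mkcond /=.
rewrite (eq_bigl (fun v => v \in Nb u)); last by move=> v; rewrite !inE hsym.
by rewrite sumr_const hreg mulr_natl.
Qed.

Lemma S_dZ (t : R) : \sum_(u : 'I_n) Av u t = t * dZs t.
Proof.
have := sumAv setT t.
rewrite (eq_bigl (fun u => true)); last by move=> u; rewrite inE.
move=> ->; rewrite /dZs big_distrr /=; apply: eq_bigr => A _.
rewrite setIT; case: #|A| => [|k]; first by rewrite !mul0r mulr0.
by rewrite exprS /=; ring.
Qed.

Lemma comb_main (t : R) : 0 < t -> (1 <= d)%N ->
  dZs t * (2 * (1 + t) ^+ d - 1) <= n%:R * (1 + t) ^+ d.-1 * Zs t.
Proof.
move=> ht hd.
have H : \sum_(v : 'I_n) (t * d%:R * (1 + t) ^+ d * Bv v t + ((1 + t) ^+ d - 1) * (1 + t) * \sum_(u in Nb v) Av u t)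
  <= \sum_(v : 'I_n) (t * d%:R * (1 + t) ^+ d * Zs t).
  by apply: ler_sum => v _; exact: vertex_ineq.
rewrite big_split /= -!big_distrr /= sumM_all sumr_const card_ord in H.
have hB : t * \sum_(v : 'I_n) Bv v t = (1 + t) * \sum_(u : 'I_n) Av u t.
  rewrite !big_distrr /=; apply: eq_bigr => v _; by rewrite C1.
rewrite S_dZ in hB.
move: H; rewrite S_dZ.
have -> : t * d%:R * (1 + t) ^+ d * \sum_(v : 'I_n) Bv v t = d%:R * (1 + t) ^+ d * (t * \sum_(v : 'I_n) Bv v t) by ring.
rewrite hB.
have hq : (1 + t) ^+ d = (1 + t) * (1 + t) ^+ d.-1 by rewrite -exprS prednK.
rewrite hq.
set Z := Zs t; set D := dZs t; set b := (1 + t) ^+ d.-1.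
have hdp : 0 < d%:R :> R by rewrite ltr0n.
have hb : 1 <= b by rewrite exprn_ege1 //; lra.
move=> H; rewrite -[Z *+ n]mulr_natl in H.
have hpos : 0 < d%:R * (1 + t) * t by rewrite !mulr_gt0 //; lra.
have H2 : (d%:R * (1 + t) * t) * (D * (2 * ((1 + t) * b) - 1)) <= (d%:R * (1 + t) * t) * (n%:R * b * Z).
  have -> : d%:R * (1 + t) * t * (D * (2 * ((1 + t) * b) - 1)) = 
   d%:R * ((1 + t) * b) * ((1 + t) * (t * D)) + ((1 + t) * b - 1) * (1 + t) * (d%:R * (t * D)) by ring.
  have -> : d%:R * (1 + t) * t * (n%:R * b * Z) = t * d%:R * ((1 + t) * b) * (n%:R * Z) by ring.
  exact: H.
by rewrite ler_pM2l in H2.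
Qed.

End Graph.
Section Kdd.
Local Open Scope ring_scope.
Variable d : nat.

Lemma ltbE (x y : nat) : Nat.ltb x y = (x < y)%N.
Proof. by apply/idP/idP => [/Nat.ltb_lt/ssrnat.ltP | /ssrnat.ltP/Nat.ltb_lt]. Qed.

Definition Lset : {set 'I_(2 * d)} := [set i : 'I_(2 * d) | (i < d)%N].

Lemma card_Lset : #|Lset| = d.
Proof.
have hle : (d <= 2 * d)%N by rewrite leq_pmull.
have -> : Lset = [set widen_ord hle i | i : 'I_d].
  apply/setP => x; rewrite !inE; apply/idP/imsetP.
    by move=> hx; exists (Ordinal hx) => //; apply: val_inj.
  by case=> i _ ->; rewrite /= ltn_ord.
rewrite card_imset ?card_ord //.
by move=> i j /(congr1 val) /= /val_inj.
Qed.

Lemma card_CLset : #|~: Lset| = d.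
Proof. by rewrite cardsCs setCK card_Lset card_ord mul2n -addnn addnK. Qed.

Lemma indep_Kdd (A : {set 'I_(2 * d)}) :
  indep (Kdd_adj d) A = (A \subset Lset) || (A \subset ~: Lset).
Proof.
apply/idP/idP.
  move/indepP => H; case: (boolP (A \subset Lset)) => //= /subsetPn [x xA xL].
  apply/subsetP => y yA; have := H x y xA yA; rewrite /Kdd_adj !ltbE.
  move: xL; rewrite !inE => /negbTE ->; by case: (y < d)%N.
case/orP => /subsetP sA; apply/indepP => x y xA yA;
  have := sA x xA; have := sA y yA; rewrite !inE /Kdd_adj !ltbE.
  by move=> -> ->.
by move=> /negbTE -> /negbTE ->.
Qed.

Lemma Zs_Kdd (t : R) : Zs (2 * d) (Kdd_adj d) t = 2 * (1 + t) ^+ d - 1.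
Proof.
rewrite /Zs (eq_bigl (fun A : {set 'I_(2 * d)} => (A \subset Lset) || (A \subset ~: Lset))); last first.
  by move=> A; rewrite indep_Kdd.
rewrite (bigID (fun A : {set 'I_(2 * d)} => A \subset Lset)) /=.
rewrite (eq_bigl (fun A : {set 'I_(2 * d)} => A \subset Lset)); last first.
  by move=> A; case: (A \subset Lset); rewrite ?andbF ?andbT ?orbT.
have HC := sum_pow_subsets (~: Lset) t.
rewrite (bigID (fun A : {set 'I_(2 * d)} => A \subset Lset)) /= in HC.
rewrite (eq_bigl (fun A : {set 'I_(2 * d)} => A == set0)) in HC; last first.
  move=> A; apply/andP/eqP => [[h1 h2]|->]; last by rewrite !sub0set.
  apply/eqP; rewrite -subset0; apply/subsetP => x xA.
  by have := subsetP h1 x xA; have := subsetP h2 x xA; rewrite !inE => ->.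
rewrite big_pred1_eq cards0 expr0 card_CLset in HC.
rewrite sum_pow_subsets card_Lset.
rewrite (eq_bigl (fun A : {set 'I_(2 * d)} => (A \subset ~: Lset) && ~~ (A \subset Lset))); last first.
  by move=> A; case: (A \subset Lset); rewrite ?andbF ?andbT.
lra.
Qed.

End Kdd.
Section Bridge.
Local Open Scope ring_scope.
Variable n : nat.

Definition toset (S : seq nat) : {set 'I_n} := [set i : 'I_n | nat_of_ord i \in S].

Lemma toset_nil : toset [::] = set0.
Proof. by apply/setP => i; rewrite !inE. Qed.

Lemma toset_cons (x : nat) (hx : (x < n)%N) (S : seq nat) :
  toset (x :: S) = Ordinal hx |: toset S.
Proof. by apply/setP => i; rewrite !inE -val_eqE. Qed.

Lemma notin_toset (x : nat) (hx : (x < n)%N) (S : seq nat) :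
  x \notin S -> Ordinal hx \notin toset S.
Proof. by rewrite !inE. Qed.

Lemma appE (T : Type) (s1 s2 : seq T) : List.app s1 s2 = cat s1 s2.
Proof. by elim: s1 => //= x s1 ->. Qed.

Lemma mapE (T1 T2 : Type) (f : T1 -> T2) (s : seq T1) : List.map f s = map f s.
Proof. by elim: s => //= x s ->. Qed.

Lemma forallbE (T : Type) (f : T -> bool) (s : seq T) : List.forallb f s = all f s.
Proof. by elim: s => //= x s ->. Qed.

Lemma filterE (T : Type) (f : T -> bool) (s : seq T) : List.filter f s = filter f s.
Proof. by elim: s => //= x s ->. Qed.

Lemma seqE (m k : nat) : List.seq m k = iota m k.
Proof. by elim: k m => //= k IH m; rewrite IH. Qed.

Lemma sum_sublists (l : seq nat) (F : {set 'I_n} -> R) : uniq l -> all (fun x => (x < n)%N) l ->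
  \sum_(S <- sublists l) F (toset S) = \sum_(A : {set 'I_n} | A \subset toset l) F A.
Proof.
elim: l F => [|x l IH] F.
  by move=> _ _; rewrite /= big_cons big_nil addr0 toset_nil sum_sub0.
move=> /= /andP[xl ul] /andP[hx al].
rewrite appE mapE big_cat big_map /= (toset_cons hx) split_subsets; last exact: notin_toset.
rewrite (IH F ul al).
under eq_bigr do rewrite (toset_cons hx).
by rewrite (IH (fun A => F (Ordinal hx |: A)) ul al).
Qed.

Lemma sublists_sub (l S : seq nat) : S \in sublists l -> subseq S l.
Proof.
elim: l S => [|x l IH] S; first by rewrite /= inE => /eqP ->.
rewrite [sublists (x :: l)]/= appE mapE mem_cat => /orP [/IH h | /mapP [S' /IH h ->]].
  by apply: (subseq_trans h); apply: subseq_cons.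
by rewrite /= eqxx.
Qed.

Lemma card_toset (S : seq nat) : uniq S -> all (fun x => (x < n)%N) S -> #|toset S| = size S.
Proof.
elim: S => [|x S IH]; first by rewrite toset_nil cards0.
move=> /= /andP[xS uS] /andP[hx aS].
by rewrite (toset_cons hx) cardsU1 (notin_toset hx xS) IH.
Qed.

Lemma indep_toset (adj : nat -> nat -> bool) (S : seq nat) : all (fun x => (x < n)%N) S ->
  independentb adj S = indep adj (toset S).
Proof.
move=> /allP aS; rewrite /independentb forallbE; apply/allP/indepP.
  move=> H x y; rewrite !inE => xS yS.
  by have := H _ xS; rewrite forallbE => /allP /(_ _ yS) /negbTE.
move=> H x xS; rewrite forallbE; apply/allP => y yS.
have hx := aS x xS; have hy := aS y yS.
have := H (Ordinal hx) (Ordinal hy); rewrite !inE /= => /(_ xS yS) ->.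
done.
Qed.

Lemma fold_sum (T : Type) (g : T -> R) (s : seq T) :
  fold_right Rplus 0%R (List.map g s) = \sum_(x <- s) g x.
Proof.
elim: s => [|x s IH]; first by rewrite big_nil.
by rewrite big_cons /= IH.
Qed.

Lemma indep_poly_Zs (adj : nat -> nat -> bool) (t : R) : indep_poly n adj t = Zs n adj t.
Proof.
rewrite /indep_poly /indep_sets fold_sum filterE big_filter seqE big_mkcond /=.
rewrite (eq_big_seq (fun S => (fun A => if indep adj A then t ^+ #|A| else 0) (toset S))); last first.
  move=> S /sublists_sub hS.
  have uS : uniq S by apply: (subseq_uniq hS); apply: iota_uniq.
  have aS : all (fun x => (x < n)%N) S.
    by apply/allP => x /(mem_subseq hS); rewrite mem_iota.
  by rewrite /= (indep_toset adj aS) (card_toset uS aS) RpowE.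
rewrite (@sum_sublists (iota 0 n) (fun A => if indep adj A then t ^+ #|A| else 0)) ?iota_uniq //; last by apply/allP => x; rewrite mem_iota.
rewrite /Zs [RHS]big_mkcond /=; apply: eq_bigl => A.
by apply/subsetP => x _; rewrite !inE mem_iota /=.
Qed.

End Bridge.
Section Analytic.
Local Open Scope R_scope.

Lemma dlim_eq (f : R -> R) x l l' : derivable_pt_lim f x l -> l = l' -> derivable_pt_lim f x l'.
Proof. by move=> h <-. Qed.

Lemma dlim_K (d : nat) (t : R) :
  derivable_pt_lim (fun x => 2 * (1 + x) ^ d - 1) t (2 * (INR d * (1 + t) ^ Init.Nat.pred d)).
Proof.
have h1 : derivable_pt_lim (fun x => 1 + x) t 1.
  apply: (dlim_eq (derivable_pt_lim_plus (fct_cte 1) id t 0 1 (derivable_pt_lim_const 1 t) (derivable_pt_lim_id t))).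
  rlra.
have h2 : derivable_pt_lim (fun x => (1 + x) ^ d) t (INR d * (1 + t) ^ Init.Nat.pred d).
  apply: (dlim_eq (derivable_pt_lim_comp (fun x => 1 + x) (fun y => y ^ d) t _ _ h1 (derivable_pt_lim_pow (1 + t) d))).
  rlra.
have h3 := derivable_pt_lim_scal _ 2 t _ h2.
apply: (dlim_eq (derivable_pt_lim_minus _ (fct_cte 1) t _ 0 h3 (derivable_pt_lim_const 1 t))).
rewrite /=; rlra.
Qed.

Lemma analytic (Z dZ : R -> R) (n d : nat) (lam : R) : 0 < lam -> (1 <= d)%coq_nat ->
  (forall t, derivable_pt_lim Z t (dZ t)) -> Z 0 = 1 -> (forall t, 0 <= t -> 1 <= Z t) ->
  (forall t, 0 < t -> dZ t * (2 * (1 + t) ^ d - 1) <= INR n * (1 + t) ^ (Init.Nat.pred d) * Z t) ->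
  2 * INR d * ln (Z lam) <= INR n * ln (2 * (1 + lam) ^ d - 1).
Proof.
move=> hl hd hD hZ0 hZ1 hI.
pose K := fun x => 2 * (1 + x) ^ d - 1.
have hKpos : forall t, 0 <= t -> 1 <= K t.
  move=> t ht; rewrite /K; have : 1 <= (1 + t) ^ d by apply: pow_R1_Rle; rlra.
  rlra.
pose h := fun x => INR n * ln (K x) - 2 * INR d * ln (Z x).
pose h' := fun x => INR n * (/ K x * (2 * (INR d * (1 + x) ^ Init.Nat.pred d)))
                    - 2 * INR d * (/ Z x * dZ x).
have hder : forall c, 0 <= c <= lam -> derivable_pt_lim h c (h' c).
  move=> c [hc0 hc1].
  have hK := hKpos c hc0; have hZ := hZ1 c hc0.
  apply: derivable_pt_lim_minus.
    apply: derivable_pt_lim_scal.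
    apply: (derivable_pt_lim_comp K ln c _ _ (dlim_K d c)).
    apply: derivable_pt_lim_ln; rlra.
  apply: derivable_pt_lim_scal.
  apply: (derivable_pt_lim_comp Z ln c _ _ (hD c)).
  apply: derivable_pt_lim_ln; rlra.
have [c [hc [hc0 hc1]]] := MVT_cor2 h h' 0 lam hl hder.
have h0 : h 0 = 0.
  rewrite /h /K hZ0 Rplus_0_r pow1 ln_1.
  have -> : 2 * 1 - 1 = 1 by rlra.
  rewrite ln_1; rlra.
have hK := hKpos c (Rlt_le _ _ hc0); have hZ := hZ1 c (Rlt_le _ _ hc0).
have hIc := hI c hc0.
have hh' : 0 <= h' c.
  have -> : h' c = (2 * INR d) * (INR n * (1 + c) ^ Init.Nat.pred d * Z c - dZ c * K c) / (K c * Z c).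
    have hK0 : K c <> 0 by rlra.
    have hZ0' : Z c <> 0 by rlra.
    rewrite /h' /Rdiv; rewrite ?RplusE ?RminusE ?RmultE ?RinvE ?RoppE.
    by field; apply/andP; split; apply/eqP.
  apply: Rmult_le_pos; last by apply: Rlt_le; apply: Rinv_0_lt_compat; rnra.
  apply: Rmult_le_pos; last by rewrite /K; rlra.
  have := pos_INR d; rlra.
have : 0 <= h lam.
  have : h lam = h' c * lam by rewrite h0 in hc; rlra.
  move=> ->; apply: Rmult_le_pos => //; rlra.
rewrite /h /K; rlra.
Qed.

End Analytic.
Section Final.

Lemma deriv_big (I : Type) (r : seq I) (P : pred I) (f df : I -> R -> R) (x : R) :
  (forall i, derivable_pt_lim (f i) x (df i x)) ->
  derivable_pt_lim (fun y => (\sum_(i <- r | P i) f i y)%R) x (\sum_(i <- r | P i) df i x)%R.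
Proof.
move=> hf; elim: r => [|i r IH].
  have -> : (fun y => (\sum_(i <- [::] | P i) f i y)%R) = fct_cte 0%R.
    by apply: functional_extensionality => y; rewrite big_nil.
  rewrite big_nil; exact: derivable_pt_lim_const.
case hP : (P i).
  have -> : (fun y => (\sum_(j <- i :: r | P j) f j y)%R) = plus_fct (f i) (fun y => (\sum_(j <- r | P j) f j y)%R).
    by apply: functional_extensionality => y; rewrite big_cons hP.
  rewrite big_cons hP; exact: derivable_pt_lim_plus.
have -> : (fun y => (\sum_(j <- i :: r | P j) f j y)%R) = (fun y => (\sum_(j <- r | P j) f j y)%R).
  by apply: functional_extensionality => y; rewrite big_cons hP.
by rewrite big_cons hP.
Qed.

Lemma deriv_Zs (n : nat) (adj : nat -> nat -> bool) (t : R) :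
  derivable_pt_lim (Zs n adj) t (dZs n adj t).
Proof.
rewrite /dZs.
have -> : Zs n adj = (fun y => (\sum_(A : {set 'I_n} | indep adj A) y ^+ #|A|)%R).
  by apply: functional_extensionality.
refine (@deriv_big _ (index_enum _) (fun A => indep adj A) (fun A y => y ^+ #|A|)%R (fun A y => #|A|%:R * y ^+ #|A|.-1)%R t _) => A.
have -> : (fun y : R => (y ^+ #|A|)%R) = (fun y => pow y #|A|).
  by apply: functional_extensionality => y; rewrite RpowE.
by rewrite -INRE -RpowE; apply: derivable_pt_lim_pow.
Qed.

Local Open Scope ring_scope.

Lemma Zs_ge1 (n : nat) (adj : nat -> nat -> bool) (t : R) : 0 <= t -> 1 <= Zs n adj t.
Proof.
move=> ht; rewrite /Zs (bigD1 set0); last by apply/indepP => x y; rewrite inE.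
rewrite cards0 expr0 lerDl; apply: sumr_ge0 => A _; exact: exprn_ge0.
Qed.

Lemma Zs_0 (n : nat) (adj : nat -> nat -> bool) : Zs n adj 0 = 1.
Proof.
rewrite /Zs (bigD1 set0); last by apply/indepP => x y; rewrite inE.
rewrite cards0 expr0 big1 => [|A /andP[_ hA]]; first exact: addr0.
by rewrite expr0n; case: (boolP (#|A| == 0%N)) => //; rewrite cards_eq0 (negbTE hA).
Qed.

Lemma card_Nb (n : nat) (adj : nat -> nat -> bool) (v : 'I_n) :
  #|Nb adj v| = count (adj v) (iota 0 n).
Proof.
rewrite /Nb -sum1dep_card -sum1_count.
by rewrite -(big_mkord (fun j => adj v j) (fun _ => 1%N)) /index_iota subn0.
Qed.

Lemma lengthE (T : Type) (s : list T) : length s = size s.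
Proof. by elim: s => //= x s ->. Qed.

End Final.

Lemma two_E : ((1 *+ 2)%R : R) = IZR 2.
Proof. by rewrite -INRE /=; rlra. Qed.

Lemma ln_ge0 (x : R) : Rle 1 x -> Rle 0 (ln x).
Proof.
move=> h; case: (Rle_lt_or_eq_dec _ _ h) => [h1|<-]; last by rewrite ln_1; rlra.
have := ln_increasing 1 x Rlt_0_1 h1; rewrite ln_1; rlra.
Qed.

Lemma neq0R (x : R) : Rlt 0 x -> x != 0%R.
Proof. by move=> h; apply/eqP => e; move: h; rewrite e; apply: Rlt_irrefl. Qed.

Lemma exp_le (x y : R) : Rle x y -> Rle (exp x) (exp y).
Proof.
move=> h; case: (Rle_lt_or_eq_dec _ _ h) => [/exp_increasing|->]; rlra.
Qed.

Local Open Scope R_scope.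

Lemma fold_ones (l : list (list nat)) :
  fold_right Rplus 0 (List.map (fun S => pow 1 (length S)) l) = INR (length l).
Proof.
elim: l => [|S l IH]; first by [].
rewrite [length _]/= S_INR -IH [fold_right _ _ _]/= pow1; rlra.
Qed.

Theorem mainTheorem9 (d n : nat) (adj : nat -> nat -> bool)
  (hd : (1 <= d)%coq_nat)
  (hG : is_simple_graph n adj)
  (hreg : is_regular n d adj)
  (htf : triangle_free n adj) :
  (forall lam : R, 0 < lam ->
     / INR n * ln (indep_poly n adj lam)
       <= / (2 * INR d) * ln (P_Kdd d lam)
     /\ / (2 * INR d) * ln (P_Kdd d lam)
        = / (2 * INR d) * ln (2 * (1 + lam) ^ d - 1))
  /\ INR (length (indep_sets n adj))
       <= Rpower (2 ^ (d + 1) - 1) (INR n / (2 * INR d)).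
Proof.
case: hG => hs hi.
have hsym : forall u v : 'I_n, adj u v = adj v u.
  by move=> u v; apply: hs; apply/ssrnat.ltP.
have hirr : forall u : 'I_n, adj u u = false.
  by move=> u; apply: hi; apply/ssrnat.ltP.
have htf' : forall u v w : 'I_n, adj u v -> adj v w -> adj u w -> False.
  move=> u v w h1 h2 h3; apply: (htf u v w); try (apply/ssrnat.ltP; exact: ltn_ord).
  by split.
have hreg' : forall v : 'I_n, #|Nb adj v| = d.
  move=> v; rewrite card_Nb -size_filter -filterE -seqE -lengthE.
  by apply: hreg; apply/ssrnat.ltP.
have hd' : (1 <= d)%N by apply/ssrnat.leP.
have hKdd : forall t, P_Kdd d t = 2 * (1 + t) ^ d - 1.
  move=> t; rewrite /P_Kdd indep_poly_Zs.
  have := Zs_Kdd d t; rewrite -RpowE => ->.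
  by rewrite two_E.
have hmain : forall lam, 0 < lam -> 2 * INR d * ln (indep_poly n adj lam) <= INR n * ln (P_Kdd d lam).
  move=> lam hl; rewrite hKdd indep_poly_Zs.
  apply: (analytic (dZ := dZs n adj)) => //.
  - exact: deriv_Zs.
  - exact: Zs_0.
  - by move=> t ht; apply/RleP; apply: Zs_ge1; apply/RleP.
  - move=> t ht; have := comb_main hsym hirr htf' hreg' (t := t) _ hd'.
    move=> /(_ (introT RltP ht)) /RleP.
    rewrite -!RpowE -!INRE; have -> : INR 2 = 2 by rewrite /=; rlra.
    by [].
split.
  move=> lam hl; split; last by rewrite hKdd.
  have := hmain lam hl.
  have hZ1 : 1 <= indep_poly n adj lam.
    rewrite indep_poly_Zs; apply/RleP; apply: Zs_ge1; apply/RleP; exact: (Rlt_le _ _ hl).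
  have hK1 : 1 <= P_Kdd d lam.
    rewrite hKdd; have : 1 <= (1 + lam) ^ d by apply: pow_R1_Rle; rlra.
    rlra.
  have lZ := ln_ge0 hZ1.
  have lK := ln_ge0 hK1.
  move: lZ lK; set a := ln (indep_poly n adj lam); set b := ln (P_Kdd d lam) => lZ lK h.
  have hdpos : 0 < INR d by apply: lt_0_INR.
  case: n {hs hi htf hreg hsym hirr htf' hreg' hmain hZ1 a lZ h} => [|m] in a lZ h *.
    rewrite /= in h *.
    have -> : a = 0 by rnra.
    rewrite Rmult_0_r; apply: Rmult_le_pos => //.
    by apply: Rlt_le; apply: Rinv_0_lt_compat; rlra.
  have hn : 0 < INR m.+1 by apply: lt_0_INR; apply: Nat.lt_0_succ.
  have e1 : / INR m.+1 * a = (2 * INR d * a) * / (INR m.+1 * (2 * INR d)).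
    have hn0 : INR m.+1 <> 0 by rlra.
    have hd0 : INR d <> 0 by rlra.
    rewrite ?RplusE ?RminusE ?RmultE ?RinvE ?RoppE.
    by field; rewrite !neq0R //; rlra.
  have e2 : / (2 * INR d) * b = (INR m.+1 * b) * / (INR m.+1 * (2 * INR d)).
    rewrite ?RplusE ?RminusE ?RmultE ?RinvE ?RoppE.
    by field; rewrite !neq0R //; rlra.
  rewrite e1 e2; apply: Rmult_le_compat_r => //.
  by apply: Rlt_le; apply: Rinv_0_lt_compat; rnra.
have hL : INR (length (indep_sets n adj)) = indep_poly n adj 1.
  by rewrite /indep_poly fold_ones.
have hm1 := hmain 1 Rlt_0_1.
have hK : P_Kdd d 1 = 2 ^ (d + 1) - 1.
  rewrite hKdd pow_add pow_1; have -> : 1 + 1 = 2 by rlra.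
  rlra.
rewrite hK in hm1.
have hZ1 : 1 <= indep_poly n adj 1.
  by rewrite indep_poly_Zs; apply/RleP; apply: Zs_ge1; apply/RleP; exact: Rle_0_1.
rewrite hL /Rpower -[indep_poly n adj 1]exp_ln; last by rlra.
apply: exp_le.
have hdpos : 0 < INR d by apply: lt_0_INR.
move: hm1; set a := ln (indep_poly n adj 1); set b := ln (2 ^ (d + 1) - 1) => hm1.
have e1 : a = (2 * INR d * a) * / (2 * INR d).
  rewrite ?RplusE ?RminusE ?RmultE ?RinvE ?RoppE.
  by field; rewrite !neq0R //; rlra.
have e2 : INR n / (2 * INR d) * b = (INR n * b) * / (2 * INR d).
  rewrite /Rdiv ?RplusE ?RminusE ?RmultE ?RinvE ?RoppE.
  by field; rewrite !neq0R //; rlra.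
rewrite e2 {1}e1; apply: Rmult_le_compat_r => //.
by apply: Rlt_le; apply: Rinv_0_lt_compat; rlra.
Qed.
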